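(* Let $N=\{1,\ldots,n\}$, $\mathcal{X}=\{-1,1\}^n$, and let $\phi:\mathcal{X}\to\{-1,1\}$ be a deterministic voting rule. Let $w\in\mathbb{R}_+^n$ be a nonzero nonnegative weight vector. Then: (1) $\phi$ is a weighted majority rule (WMR) with weight vector $w$ if and only if $$\frac{\sum_{i\in N} w_i r_i(\phi,p)}{\sum_{i\in N} w_i}\ \geq\ \frac12 \quad\text{for all } p\in\Delta(\mathcal{X}).$$ (2) $\phi$ is a WMR with weight vector $w$ allowing no ties if and only if $$\frac{\sum_{i\in N} w_i r_i(\phi,p)}{\sum_{i\in N} w_i}\ >\ \frac12 \quad\text{for all } p\in\Delta(\mathcal{X}).$$
   Context: $\Delta(\mathcal{X})$ is the set of all probability distributions on $\mathcal{X}$. For $p\in\Delta(\mathcal{X})$, the responsiveness of individual $i$ is $r_i(\phi,p)=p(\{x\in\mathcal{X}:\phi(x)=x_i\})$. A deterministic voting rule $\phi$ is a weighted majority rule (WMR) with nonzero weight vector $w\in\mathbb{R}^n$ if $\phi(x)=1$ whenever $\sum_i w_ix_i>0$ and $\phi(x)=-1$ whenever $\sum_i w_ix_i<0$ (profiles with $\sum_i w_ix_i=0$, called ties, may be assigned arbitrarily). The WMR with weight vector $w$ allows no ties if $\sum_i w_ix_i\neq 0$ for every $x\in\mathcal{X}$. *)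

(* Defs.v *)
From mathcomp Require Import all_boot all_order all_algebra.
Set Implicit Arguments. Unset Strict Implicit. Unset Printing Implicit Defensive.
Import Order.TTheory GRing.Theory Num.Theory.
Local Open Scope ring_scope.

(* A profile x in X = {-1,1}^n is encoded as a finite function 'I_n -> bool,
   where true stands for +1 and false for -1. *)
Definition profile (n : nat) := {ffun 'I_n -> bool}.

Definition vote {R : numDomainType} (b : bool) : R := if b then 1 else -1.

Definition is_distr {R : numDomainType} (n : nat) (p : profile n -> R) : Prop :=
  (forall x, 0 <= p x) /\ \sum_(x : profile n) p x = 1.

Definition responsiveness {R : numDomainType} (n : nat)
  (phi : profile n -> bool) (p : profile n -> R) (i : 'I_n) : R :=
  \sum_(x : profile n | phi x == x i) p x.

Definition wscore {R : numDomainType} (n : nat) (w : 'I_n -> R) (x : profile n) : R :=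
  \sum_(i < n) w i * vote (x i).

Definition is_WMR {R : numDomainType} (n : nat) (phi : profile n -> bool)
  (w : 'I_n -> R) : Prop :=
  forall x, (0 < wscore w x -> phi x = true) /\ (wscore w x < 0 -> phi x = false).

Definition no_ties {R : numDomainType} (n : nat) (w : 'I_n -> R) : Prop :=
  forall x : profile n, wscore w x != 0.

(* Main.v *)
Require Import Defs.
From mathcomp Require Import all_boot all_order all_algebra.
From mathcomp Require Import ring lra.
Import Order.TTheory GRing.Theory Num.Theory.
Local Open Scope ring_scope.

Section Aux.
Variables (R : realFieldType) (n : nat) (phi : profile n -> bool) (w : 'I_n -> R).

Definition gg (x : profile n) : R := vote (phi x) * wscore w x.

Lemma ind_vote (a b : bool) : ((a == b)%:R : R) = (1 + vote a * vote b) / 2.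
Proof. by case: a; case: b; rewrite /vote /=; field. Qed.

Lemma key (p : profile n -> R) :
  \sum_(i < n) w i * responsiveness phi p i
  = \sum_(x : profile n) p x * ((\sum_(i < n) w i) + gg x) / 2.
Proof.
have E : forall i, responsiveness phi p i = \sum_(x : profile n) p x * (phi x == x i)%:R.
  move=> i; rewrite /responsiveness big_mkcond /=; apply: eq_bigr => x _.
  by case: (phi x == x i); rewrite ?mulr1 ?mulr0.
under eq_bigr do rewrite E big_distrr /=.
rewrite exchange_big /=; apply: eq_bigr => x _.
rewrite /gg /wscore.
have -> : \sum_(i < n) w i * (p x * (phi x == x i)%:R)
   = p x * \sum_(i < n) w i * (phi x == x i)%:R.
  by rewrite big_distrr /=; apply: eq_bigr => i _; ring.
rewrite -mulrA; congr (_ * _).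
rewrite (eq_bigr (fun i => w i * ((1 + vote (phi x) * vote (x i)) / 2))); last by move=> i _; rewrite ind_vote.
rewrite big_distrr /= -big_split /= mulr_suml; apply: eq_bigr => i _; ring.
Qed.

Lemma ratio (p : profile n -> R) : is_distr p -> 0 < \sum_(i < n) w i ->
  (\sum_(i < n) w i * responsiveness phi p i) / (\sum_(i < n) w i)
  = 1/2 + (\sum_(x : profile n) p x * gg x) / (2 * \sum_(i < n) w i).
Proof.
move=> [_ Hs] Wp; rewrite key.
set W := \sum_(i < n) w i.
have -> : \sum_(x : profile n) p x * (W + gg x) / 2
   = (W * \sum_(x : profile n) p x + \sum_(x : profile n) p x * gg x) / 2.
  rewrite -mulr_suml big_distrr -big_split /=; congr (_ / _).
  by apply: eq_bigr => x _; ring.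
rewrite Hs; field; by rewrite gt_eqF.
Qed.

Definition dirac (x : profile n) : profile n -> R := fun y => (y == x)%:R.

Lemma dirac_distr x : is_distr (dirac x).
Proof.
split; first by move=> y; rewrite /dirac ler0n.
rewrite (bigD1 x) //= /dirac eqxx big1 ?addr0 //.
by move=> y /negbTE ->.
Qed.

Lemma dirac_sum x : \sum_(y : profile n) dirac x y * gg y = gg x.
Proof.
rewrite (bigD1 x) //= /dirac eqxx mul1r big1 ?addr0 //.
by move=> y /negbTE ->; rewrite mul0r.
Qed.

Lemma wmr_iff : is_WMR phi w <-> forall x, 0 <= gg x.
Proof.
rewrite /gg /vote; split.
  move=> H x; case: (H x) => H1 H2.
  case E: (phi x).
    rewrite mul1r leNgt; apply/negP => /H2; by rewrite E.
  rewrite mulN1r oppr_ge0 leNgt; apply/negP => /H1; by rewrite E.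
move=> H x; have := H x; case: (phi x) => Hg; split => Hs //.
- move: Hg; rewrite mul1r => Hg; lra.
- move: Hg; rewrite mulN1r => Hg; lra.
Qed.

Lemma wmr_nt_iff : is_WMR phi w /\ no_ties w <-> forall x, 0 < gg x.
Proof.
split.
  move=> [/wmr_iff H Hn] x; rewrite lt_def (H x) andbT /gg mulf_eq0 negb_or Hn andbT.
  by rewrite /vote; case: (phi x); rewrite ?oppr_eq0 oner_eq0.
move=> H; split.
  by apply/wmr_iff => x; apply: ltW.
move=> x; apply/eqP => E; have := H x; by rewrite /gg E mulr0 ltxx.
Qed.

Lemma W_pos : (forall i, 0 <= w i) -> (exists i, w i != 0) -> 0 < \sum_(i < n) w i.
Proof.
move=> H [i Hi]; rewrite (bigD1 i) //=.
have : 0 < w i by rewrite lt_def Hi H.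
have : 0 <= \sum_(j < n | j != i) w j by apply: sumr_ge0.
lra.
Qed.

End Aux.

Theorem lemma2 (R : realFieldType) (n : nat) (phi : profile n -> bool)
  (w : 'I_n -> R) (w_ge0 : forall i, 0 <= w i) (w_neq0 : exists i, w i != 0) :
  (is_WMR phi w <->
     forall p : profile n -> R, is_distr p ->
       (\sum_(i < n) w i * responsiveness phi p i) / (\sum_(i < n) w i) >= 1 / 2)
  /\
  (is_WMR phi w /\ no_ties w <->
     forall p : profile n -> R, is_distr p ->
       (\sum_(i < n) w i * responsiveness phi p i) / (\sum_(i < n) w i) > 1 / 2).
Proof.
have Wp := @W_pos R n w w_ge0 w_neq0.

set W := \sum_(i < n) w i in Wp *.
have W2 : 0 < 2 * W by rewrite mulr_gt0.
split.
  rewrite wmr_iff; split.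
    move=> H p Hp; rewrite ratio //.
    suff : 0 <= (\sum_(x : profile n) p x * gg R n phi w x) / (2 * W) by lra.
    rewrite ler_pdivlMr // mul0r; apply: sumr_ge0 => x _.
    by apply: mulr_ge0; [case: Hp | apply: H].
  move=> H x; have := H _ (dirac_distr R n x); rewrite ratio //; last exact: dirac_distr. rewrite (dirac_sum R n phi w x).
  move=> H2.
  have : 0 <= gg R n phi w x / (2 * W) by lra.
  by rewrite ler_pdivlMr // mul0r.
rewrite wmr_nt_iff; split.
  move=> H p Hp; rewrite ratio //.
  suff : 0 < (\sum_(x : profile n) p x * gg R n phi w x) / (2 * W) by lra.
  rewrite ltr_pdivlMr // mul0r.
  case: Hp => Hp0 Hp1.
  case: (pickP (fun x => 0 < p x)) => [x Hx|Hn]; last first.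
    move: Hp1; rewrite big1 => [|x _]; first by move/eqP; rewrite eq_sym oner_eq0.
    by apply/eqP; rewrite eq_le Hp0 andbT leNgt Hn.
  rewrite (bigD1 x) //=.
  have : 0 < p x * gg R n phi w x by rewrite mulr_gt0.
  have : 0 <= \sum_(y : profile n | y != x) p y * gg R n phi w y.
    by apply: sumr_ge0 => y _; apply: mulr_ge0 => //; apply: ltW.
  lra.
move=> H x; have := H _ (dirac_distr R n x); rewrite ratio //; last exact: dirac_distr. rewrite (dirac_sum R n phi w x).
move=> H2.
have : 0 < gg R n phi w x / (2 * W) by lra.
by rewrite ltr_pdivlMr // mul0r.
Qed.
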